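(* Let $R$ and $S$ be bornological $V$-algebras. Then $(R\otimes S)^{\mathrm{lg}}=R^{\mathrm{lg}}\otimes S^{\mathrm{lg}}$ as bornological algebras, and hence $\overline{R\otimes S}^{\mathrm{lg}}\cong\overline R^{\mathrm{lg}}\hat\otimes\overline S^{\mathrm{lg}}$.
   Context: $V$ complete DVR, uniformizer $\pi$, $|\pi|=\epsilon\in(0,1)$; tensor products over $V$. Convex bornologies (bounded sets contain finite sets, closed under subsets, finite unions and generated $V$-submodules). The bornological tensor product $X\otimes Y$ of bornological $V$-modules is the algebraic tensor product with bornology generated by the images of $S\otimes T$ for bounded submodules $S,T$; $\hat\otimes$ is its completion (complete = bounded $\pi$-adically complete separated submodules cofinal; completion = universal bounded map to a complete module). For a bounded $V$-submodule $M$ of a bornological $V$-algebra, ''$\varrho(M)\le1$'' means $\sum_{n\ge0}\pi^{\lceil\log_\epsilon(r^{-n})\rceil}M^n$ bounded for all $r>1$. The linear growth bornology ${}^{\mathrm{lg}}$ on a bornological $V$-algebra is the smallest algebra bornology containing the given one in which every bounded $V$-submodule has $\varrho\le1$; $\overline{(\cdot)}^{\mathrm{lg}}$ is the completion for it. *)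

(* Defs.v *)
From HB Require Import structures.
From mathcomp Require Import all_boot all_order all_algebra.
From Stdlib Require Rdefinitions Raxioms R_Ifp Rpower Rpow_def.
Set Implicit Arguments. Unset Strict Implicit. Unset Printing Implicit Defensive.
Import GRing.Theory.
Local Open Scope ring_scope.

Definition is_dvr_uniformizer (V : idomainType) (pi : V) : Prop :=
  pi != 0 /\ pi \isn't a GRing.unit /\
  forall x : V, x != 0 -> exists (u : V) (n : nat), u \is a GRing.unit /\ x = u * pi ^+ n.

Definition is_pi_adically_complete_ring (V : idomainType) (pi : V) : Prop :=
  forall a : nat -> V, exists x : V,
    forall n : nat, exists y : V, x - \sum_(k < n) a k * pi ^+ k = pi ^+ n * y.

Definition incl (X : Type) (A B : X -> Prop) : Prop := forall x, A x -> B x.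

Inductive span (V : pzRingType) (X : lmodType V) (A : X -> Prop) : X -> Prop :=
| span_zero : span A 0
| span_in x : A x -> span A x
| span_add x y : span A x -> span A y -> span A (x + y)
| span_scale (a : V) x : span A x -> span A (a *: x).

Definition is_submod (V : pzRingType) (X : lmodType V) (M : X -> Prop) : Prop :=
  M 0 /\ (forall x y, M x -> M y -> M (x + y)) /\ (forall (a : V) x, M x -> M (a *: x)).

Definition image (X Y : Type) (f : X -> Y) (A : X -> Prop) : Y -> Prop :=
  fun y => exists x, A x /\ y = f x.

Definition is_linear (V : pzRingType) (X Y : lmodType V) (f : X -> Y) : Prop :=
  forall (a : V) u v, f (a *: u + v) = a *: f u + f v.

Definition is_bilinear (V : pzRingType) (X Y Z : lmodType V) (f : X -> Y -> Z) : Prop :=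
  (forall x, is_linear (f x)) /\ (forall y, is_linear (fun x => f x y)).

Definition is_convex_bornology (V : pzRingType) (X : lmodType V)
    (B : (X -> Prop) -> Prop) : Prop :=
  (forall A : X -> Prop, (exists s : seq X, forall x, A x -> x \in s) -> B A) /\
  (forall A A', B A -> incl A' A -> B A') /\
  (forall A A', B A -> B A' -> B (fun x => A x \/ A' x)) /\
  (forall A, B A -> B (span A)).

Definition setmul (V : pzRingType) (R : algType V) (A A' : R -> Prop) : R -> Prop :=
  fun x => exists a b, A a /\ A' b /\ x = a * b.

Definition is_alg_bornology (V : pzRingType) (R : algType V)
    (B : (R -> Prop) -> Prop) : Prop :=
  is_convex_bornology B /\ (forall A A', B A -> B A' -> B (setmul A A')).

Definition bounded_map (V : pzRingType) (X Y : lmodType V)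
    (BX : (X -> Prop) -> Prop) (BY : (Y -> Prop) -> Prop) (f : X -> Y) : Prop :=
  forall A, BX A -> BY (image f A).

Fixpoint mpow (V : pzRingType) (R : algType V) (M : R -> Prop) (n : nat) : R -> Prop :=
  match n with
  | 0 => span (fun x => x = 1)
  | n'.+1 => span (setmul (mpow M n') M)
  end.

Definition pimul (V : pzRingType) (X : lmodType V) (pi : V) (k : nat) (M : X -> Prop)
    : X -> Prop := fun x => exists y, M y /\ x = pi ^+ k *: y.

Definition Rceil (x : Rdefinitions.R) : BinNums.Z :=
  BinInt.Z.opp (R_Ifp.Int_part (Rdefinitions.Ropp x)).

(* ceil(log_eps(r^(-n))) as a natural number *)
Definition lg_exp (eps r : Rdefinitions.R) (n : nat) : nat :=
  BinInt.Z.to_nat (Rceil (Rdefinitions.Rdiv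
     (Rpower.ln (Rdefinitions.Rinv (Rpow_def.pow r n))) (Rpower.ln eps))).

Definition rho_le1 (V : pzRingType) (R : algType V) (pi : V) (eps : Rdefinitions.R)
    (B : (R -> Prop) -> Prop) (M : R -> Prop) : Prop :=
  forall r : Rdefinitions.R, Rdefinitions.Rlt (Rdefinitions.IZR (BinNums.Zpos BinNums.xH)) r ->
    B (span (fun x => exists n : nat, pimul pi (lg_exp eps r n) (mpow M n) x)).

Definition lg_bornology (V : pzRingType) (R : algType V) (pi : V) (eps : Rdefinitions.R)
    (B : (R -> Prop) -> Prop) : (R -> Prop) -> Prop :=
  fun A => forall B' : (R -> Prop) -> Prop,
    is_alg_bornology B' -> (forall A0, B A0 -> B' A0) ->
    (forall M, is_submod M -> B' M -> rho_le1 pi eps B' M) -> B' A.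

Definition is_tensor_product (V : pzRingType) (X Y T : lmodType V) (t : X -> Y -> T) : Prop :=
  is_bilinear t /\
  forall (W : lmodType V) (f : X -> Y -> W), is_bilinear f ->
    exists g : T -> W, is_linear g /\ (forall x y, g (t x y) = f x y) /\
      (forall g' : T -> W, is_linear g' -> (forall x y, g' (t x y) = f x y) ->
         forall z, g' z = g z).

Definition is_tensor_algebra (V : pzRingType) (R S T : algType V) (t : R -> S -> T) : Prop :=
  is_tensor_product t /\ t 1 1 = 1 /\
  (forall r r' s s', t r s * t r' s' = t (r * r') (s * s')).

Definition tensor_bornology (V : pzRingType) (X Y T : lmodType V)
    (BX : (X -> Prop) -> Prop) (BY : (Y -> Prop) -> Prop) (t : X -> Y -> T)
    : (T -> Prop) -> Prop :=
  fun A => forall B' : (T -> Prop) -> Prop, is_convex_bornology B' ->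
    (forall S U, is_submod S -> BX S -> is_submod U -> BY U ->
       B' (span (fun z => exists s u, S s /\ U u /\ z = t s u))) -> B' A.

Definition pi_complete_separated (V : pzRingType) (X : lmodType V) (pi : V)
    (M : X -> Prop) : Prop :=
  (forall x, M x -> (forall n, exists y, M y /\ x = pi ^+ n *: y) -> x = 0) /\
  (forall s : nat -> X, (forall n, M (s n)) ->
     (forall n, exists y, M y /\ s n.+1 - s n = pi ^+ n *: y) ->
     exists x, M x /\ forall n, exists y, M y /\ x - s n = pi ^+ n *: y).

Definition is_complete (V : pzRingType) (X : lmodType V) (pi : V)
    (B : (X -> Prop) -> Prop) : Prop :=
  forall A, B A -> exists M, is_submod M /\ B M /\ incl A M /\ pi_complete_separated pi M.

Definition is_completion (V : pzRingType) (X C : lmodType V) (pi : V)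
    (BX : (X -> Prop) -> Prop) (BC : (C -> Prop) -> Prop) (j : X -> C) : Prop :=
  is_convex_bornology BC /\ is_complete pi BC /\ is_linear j /\ bounded_map BX BC j /\
  forall (W : lmodType V) (BW : (W -> Prop) -> Prop) (f : X -> W),
    is_convex_bornology BW -> is_complete pi BW -> is_linear f -> bounded_map BX BW f ->
    exists g : C -> W, is_linear g /\ bounded_map BC BW g /\ (forall x, g (j x) = f x) /\
      (forall g' : C -> W, is_linear g' -> bounded_map BC BW g' ->
         (forall x, g' (j x) = f x) -> forall z, g' z = g z).

Definition is_alg_hom (V : pzRingType) (R S : algType V) (f : R -> S) : Prop :=
  is_linear f /\ f 1 = 1 /\ (forall x y, f (x * y) = f x * f y).

Definition is_alg_completion (V : pzRingType) (R C : algType V) (pi : V)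
    (BR : (R -> Prop) -> Prop) (BC : (C -> Prop) -> Prop) (j : R -> C) : Prop :=
  is_alg_bornology BC /\ is_alg_hom j /\ is_completion pi BR BC j.

(* Main.v *)
Require Import Defs.
From Stdlib Require Import Reals Lra Lia ZArith.
Local Open Scope R_scope.

Lemma Rceil_bounds (y : R) : y <= IZR (Rceil y) < y + 1.
Proof.
unfold Rceil. destruct (base_Int_part (- y)) as [h1 h2].
rewrite opp_IZR. lra.
Qed.

Lemma lg_exp_eq (eps r : R) (n : nat) : 0 < eps -> eps < 1 -> 1 < r ->
  lg_exp eps r n = Z.to_nat (Rceil (INR n * (ln r / - ln eps))).
Proof.
intros h0 h1 hr. unfold lg_exp. f_equal. f_equal.
assert (hl : ln eps < 0) by (rewrite <- ln_1; apply ln_increasing; lra).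
rewrite ln_Rinv by (apply pow_lt; lra).
rewrite ln_pow by lra. field. lra.
Qed.

Lemma lg_exp_split (eps r : R) : 0 < eps -> eps < 1 -> 1 < r ->
  exists r1, 1 < r1 /\ exists N : nat, forall n : nat, (N <= n)%nat ->
    (2 * lg_exp eps r1 n <= lg_exp eps r n)%nat.
Proof.
intros h0 h1 hr.
assert (hl : ln eps < 0) by (rewrite <- ln_1; apply ln_increasing; lra).
assert (hlr : 0 < ln r) by (rewrite <- ln_1; apply ln_increasing; lra).
set (k := ln r / - ln eps).
assert (hk : 0 < k) by (unfold k; apply Rdiv_lt_0_compat; lra).
exists (exp (ln r / 4)). split.
{ rewrite <- exp_0. apply exp_increasing. lra. }
set (y := 4 / k).
destruct (archimed y) as [hy1 hy2].
assert (hy : 0 < y) by (unfold y; apply Rdiv_lt_0_compat; lra).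
assert (hup : (0 <= up y)%Z) by (apply le_IZR; lra).
exists (Z.to_nat (up y)). intros n hn.
assert (hr1 : 1 < exp (ln r / 4)) by (rewrite <- exp_0; apply exp_increasing; lra).
rewrite (lg_exp_eq _ _ n h0 h1 hr1), (lg_exp_eq _ _ n h0 h1 hr).
rewrite ln_exp.
assert (hN : IZR (up y) <= INR n).
{ rewrite <- (Z2Nat.id (up y)) by lia. rewrite <- INR_IZR_INZ. apply le_INR. exact hn. }
set (x := INR n * k).
assert (hx : 4 <= x).
{ unfold x. assert (y * k = 4) by (unfold y; field; lra).
  assert (y * k <= INR n * k) by (apply Rmult_le_compat_r; lra). lra. }
assert (e : INR n * (ln r / 4 / - ln eps) = x / 4) by (unfold x, k; field; lra).
rewrite e.
destruct (Rceil_bounds (x / 4)) as [a1 a2].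
destruct (Rceil_bounds x) as [b1 b2].
assert (hc : (2 * Rceil (x / 4) <= Rceil x)%Z).
{ apply le_IZR. rewrite mult_IZR. lra. }
assert (hc0 : (0 <= Rceil (x / 4))%Z) by (apply le_IZR; lra).
change (INR n * (ln r / - ln eps)) with x.
revert hc hc0. generalize (Rceil (x / 4)) (Rceil x). intros z1 z2 hc hc0.
lia.
Qed.

Local Close Scope R_scope.
From HB Require Import structures.
From mathcomp Require Import all_boot all_order all_algebra.
From mathcomp Require Import boolp.
From Stdlib Require Rdefinitions.
Set Implicit Arguments. Unset Strict Implicit. Unset Printing Implicit Defensive.
Import GRing.Theory.
Local Open Scope ring_scope.

Notation img := Defs.image.
Notation span := Defs.span.

Lemma lin0 (V : pzRingType) (X Y : lmodType V) (f : X -> Y) : is_linear f -> f 0 = 0.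
Proof.
move=> hf; have := hf 1 0 0; rewrite !scale1r addr0 => e.
by apply: (@addrI _ (f 0)); rewrite addr0 -e.
Qed.

Lemma linD (V : pzRingType) (X Y : lmodType V) (f : X -> Y) u v :
  is_linear f -> f (u + v) = f u + f v.
Proof. by move=> hf; have := hf 1 u v; rewrite !scale1r. Qed.

Lemma linZ (V : pzRingType) (X Y : lmodType V) (f : X -> Y) a u :
  is_linear f -> f (a *: u) = a *: f u.
Proof. by move=> hf; have := hf a u 0; by rewrite (lin0 hf) !addr0. Qed.

Lemma linN (V : pzRingType) (X Y : lmodType V) (f : X -> Y) u :
  is_linear f -> f (- u) = - f u.
Proof. by move=> hf; rewrite -scaleN1r linZ // scaleN1r. Qed.

Lemma linB (V : pzRingType) (X Y : lmodType V) (f : X -> Y) u v :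
  is_linear f -> f (u - v) = f u - f v.
Proof. by move=> hf; rewrite linD // linN. Qed.

Lemma lin_comp (V : pzRingType) (X Y Z : lmodType V) (f : X -> Y) (g : Y -> Z) :
  is_linear f -> is_linear g -> is_linear (fun x => g (f x)).
Proof. by move=> hf hg a u v; rewrite hf hg. Qed.

Lemma lin_id (V : pzRingType) (X : lmodType V) : is_linear (fun x : X => x).
Proof. by []. Qed.

Lemma span_incl (V : pzRingType) (X : lmodType V) (A : X -> Prop) : incl A (span A).
Proof. by move=> x; apply: span_in. Qed.

Lemma span_submod (V : pzRingType) (X : lmodType V) (A : X -> Prop) : is_submod (span A).
Proof. split; first exact: span_zero. split; [exact: span_add | exact: span_scale]. Qed.

Lemma submod_opp (V : pzRingType) (X : lmodType V) (M : X -> Prop) x :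
  is_submod M -> M x -> M (- x).
Proof. by move=> [h0 [hD hZ]] hx; rewrite -scaleN1r; apply: hZ. Qed.

Lemma submod_sub (V : pzRingType) (X : lmodType V) (M : X -> Prop) x y :
  is_submod M -> M x -> M y -> M (x - y).
Proof. move=> hM hx hy; apply: hM.2.1 => //; exact: submod_opp. Qed.

Lemma span_min (V : pzRingType) (X : lmodType V) (A M : X -> Prop) :
  is_submod M -> incl A M -> incl (span A) M.
Proof.
move=> [h0 [hD hZ]] hAM x; elim => //.
- by move=> *; apply: hD.
- by move=> *; apply: hZ.
Qed.

Lemma span_mono (V : pzRingType) (X : lmodType V) (A A' : X -> Prop) :
  incl A A' -> incl (span A) (span A').
Proof. move=> h; apply: span_min; first exact: span_submod. by move=> x /h; apply: span_in. Qed.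

Lemma span_idem (V : pzRingType) (X : lmodType V) (A : X -> Prop) :
  incl (span (span A)) (span A).
Proof. apply: span_min; [exact: span_submod | by []]. Qed.

Lemma span_of_submod (V : pzRingType) (X : lmodType V) (M : X -> Prop) :
  is_submod M -> incl (span M) M.
Proof. by move=> hM; apply: span_min. Qed.

Lemma lin_span (V : pzRingType) (X Y : lmodType V) (f : X -> Y) (A : X -> Prop) :
  is_linear f -> incl (img f (span A)) (span (img f A)).
Proof.
move=> hf y [x [hx ->]]; elim: hx.
- rewrite (lin0 hf); exact: span_zero.
- by move=> z hz; apply: span_in; exists z.
- by move=> u v _ hu _ hv; rewrite linD //; apply: span_add.
- by move=> a u _ hu; rewrite linZ //; apply: span_scale.
Qed.

Lemma img_submod (V : pzRingType) (X Y : lmodType V) (f : X -> Y) (M : X -> Prop) :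
  is_linear f -> is_submod M -> is_submod (img f M).
Proof.
move=> hf [h0 [hD hZ]]; split; first by exists 0; rewrite (lin0 hf).
split.
- by move=> _ _ [x [hx ->]] [y [hy ->]]; exists (x + y); rewrite linD //; split => //; apply: hD.
- by move=> a _ [x [hx ->]]; exists (a *: x); rewrite linZ //; split => //; apply: hZ.
Qed.

Lemma img_mono (X Y : Type) (f : X -> Y) (A A' : X -> Prop) :
  incl A A' -> incl (img f A) (img f A').
Proof. by move=> h _ [x [hx ->]]; exists x; split => //; apply: h. Qed.

Lemma born_fin (V : pzRingType) (X : lmodType V) (B : (X -> Prop) -> Prop) (s : seq X) :
  is_convex_bornology B -> B (fun x => x \in s).
Proof. by move=> [h _]; apply: h; exists s. Qed.

Lemma born_sub (V : pzRingType) (X : lmodType V) (B : (X -> Prop) -> Prop) A A' :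
  is_convex_bornology B -> B A -> incl A' A -> B A'.
Proof. by move=> [_ [h _]]; apply: h. Qed.

Lemma born_union (V : pzRingType) (X : lmodType V) (B : (X -> Prop) -> Prop) A A' :
  is_convex_bornology B -> B A -> B A' -> B (fun x => A x \/ A' x).
Proof. by move=> [_ [_ [h _]]]; apply: h. Qed.

Lemma born_span (V : pzRingType) (X : lmodType V) (B : (X -> Prop) -> Prop) A :
  is_convex_bornology B -> B A -> B (span A).
Proof. by move=> [_ [_ [_ h]]]; apply: h. Qed.

Lemma born_single (V : pzRingType) (X : lmodType V) (B : (X -> Prop) -> Prop) (x : X) :
  is_convex_bornology B -> B (fun y => y = x).
Proof.
move=> hB; apply: (born_sub hB (born_fin [:: x] hB)) => y ->; by rewrite inE.
Qed.

Lemma born_empty (V : pzRingType) (X : lmodType V) (B : (X -> Prop) -> Prop) :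
  is_convex_bornology B -> B (fun _ => False).
Proof. move=> hB; apply: (born_sub hB (born_fin [::] hB)) => y []. Qed.

Lemma born_finunion (V : pzRingType) (X : lmodType V) (B : (X -> Prop) -> Prop)
  (F : nat -> X -> Prop) N :
  is_convex_bornology B -> (forall n, (n < N)%N -> B (F n)) ->
  B (fun x => exists n, (n < N)%N /\ F n x).
Proof.
move=> hB; elim: N => [|N IH] hF.
  by apply: (born_sub hB (born_empty hB)) => x [n []].
apply: (born_sub hB (born_union hB (IH (fun n hn => hF n (ltnW hn))) (hF N (ltnSn N)))).
move=> x [n [hn hx]]; rewrite ltnS leq_eqVlt in hn; case/orP: hn => [/eqP <-|hn]; first by right.
by left; exists n.
Qed.

Lemma alg_convex (V : pzRingType) (R : algType V) (B : (R -> Prop) -> Prop) :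
  is_alg_bornology B -> is_convex_bornology B.
Proof. by case. Qed.

Lemma alg_mul (V : pzRingType) (R : algType V) (B : (R -> Prop) -> Prop) A A' :
  is_alg_bornology B -> B A -> B A' -> B (setmul A A').
Proof. by move=> [_ h]; apply: h. Qed.

Lemma lg_incl (V : pzRingType) (R : algType V) pi eps (B : (R -> Prop) -> Prop) A :
  B A -> lg_bornology pi eps B A.
Proof. by move=> hA B' _ h _; apply: h. Qed.

Lemma lg_alg (V : pzRingType) (R : algType V) pi eps (B : (R -> Prop) -> Prop) :
  is_alg_bornology (lg_bornology pi eps B).
Proof.
split; first split.
- by move=> A hA B' hB' _ _; apply: hB'.1.1.
split; first by move=> A A' hA hsub B' hB' h1 h2; apply: (hB'.1.2.1 A) => //; apply: hA.
split; first by move=> A A' hA hA' B' hB' h1 h2; apply: hB'.1.2.2.1; [apply: hA|apply: hA'].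
- by move=> A hA B' hB' h1 h2; apply: hB'.1.2.2.2; apply: hA.
- by move=> A A' hA hA' B' hB' h1 h2; apply: hB'.2; [apply: hA|apply: hA'].
Qed.

Lemma lg_rho (V : pzRingType) (R : algType V) pi eps (B : (R -> Prop) -> Prop) M :
  is_submod M -> lg_bornology pi eps B M -> rho_le1 pi eps (lg_bornology pi eps B) M.
Proof.
move=> hM hMb r hr B' hB' h1 h2; apply: (h2 M hM _ r hr); by apply: hMb.
Qed.

Lemma lg_mono (V : pzRingType) (R : algType V) pi eps (B B2 : (R -> Prop) -> Prop) A :
  (forall A, B A -> B2 A) -> lg_bornology pi eps B A -> lg_bornology pi eps B2 A.
Proof. by move=> hB hA B' h0 h1 h2; apply: hA => // A0 /hB /h1. Qed.

Definition ptens (V : pzRingType) (X Y T : lmodType V) (t : X -> Y -> T)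
  (S : X -> Prop) (U : Y -> Prop) : T -> Prop :=
  fun z => exists s u, S s /\ U u /\ z = t s u.

Lemma tensor_convex (V : pzRingType) (X Y T : lmodType V) BX BY (t : X -> Y -> T) :
  is_convex_bornology (tensor_bornology BX BY t).
Proof.
split; first by move=> A hA B' hB' _; apply: hB'.1.
split; first by move=> A A' hA hsub B' hB' h; apply: (hB'.2.1 A) => //; apply: hA.
split; first by move=> A A' hA hA' B' hB' h; apply: hB'.2.2.1; [apply: hA|apply: hA'].
by move=> A hA B' hB' h; apply: hB'.2.2.2; apply: hA.
Qed.

Lemma tensor_gen (V : pzRingType) (X Y T : lmodType V) BX BY (t : X -> Y -> T) S U :
  is_submod S -> BX S -> is_submod U -> BY U ->
  tensor_bornology BX BY t (span (ptens t S U)).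
Proof. by move=> hS hbS hU hbU B' _ h; apply: h. Qed.

Lemma tensor_mono (V : pzRingType) (X Y T : lmodType V) BX BY BX2 BY2 (t : X -> Y -> T) A :
  (forall A, BX A -> BX2 A) -> (forall A, BY A -> BY2 A) ->
  tensor_bornology BX BY t A -> tensor_bornology BX2 BY2 t A.
Proof.
move=> hX hY hA B' hB' h; apply: hA => // S U hS hbS hU hbU; apply: h => //; [exact: hX|exact: hY].
Qed.


Definition fclosed (V : pzRingType) (D : Type) (W : lmodType V) (P : (D -> W) -> Prop) :=
  prod (P (fun _ => 0)) (prod (forall f g, P f -> P g -> P (fun d => f d + g d))
  (forall (a : V) f, P f -> P (fun d => a *: f d))).

Definition lsub (V : pzRingType) (D : Type) (W : lmodType V) (P : (D -> W) -> Prop)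
  (hP : fclosed P) := {f : D -> W | P f}.

HB.instance Definition _ (V : pzRingType) (D : Type) (W : lmodType V) (P : (D -> W) -> Prop) (hP : fclosed P) := gen_eqMixin (@lsub V D W P hP).
HB.instance Definition _ (V : pzRingType) (D : Type) (W : lmodType V) (P : (D -> W) -> Prop) (hP : fclosed P) := gen_choiceMixin (@lsub V D W P hP).

Lemma lsub_eq (V : pzRingType) (D : Type) (W : lmodType V) (P : (D -> W) -> Prop) (hP : fclosed P) (x y : @lsub V D W P hP) : proj1_sig x =1 proj1_sig y -> x = y.
Proof.
case: x => f hf; case: y => g hg /= e. have efg := funext e. subst g.
by rewrite (Prop_irrelevance hf hg).
Qed.

Definition lzero (V : pzRingType) (D : Type) (W : lmodType V) (P : (D -> W) -> Prop) (hP : fclosed P) : @lsub V D W P hP := exist _ _ hP.1.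
Definition ladd (V : pzRingType) (D : Type) (W : lmodType V) (P : (D -> W) -> Prop) (hP : fclosed P) (x y : @lsub V D W P hP) : @lsub V D W P hP :=
  exist _ _ (hP.2.1 _ _ (proj2_sig x) (proj2_sig y)).
Definition lscale (V : pzRingType) (D : Type) (W : lmodType V) (P : (D -> W) -> Prop) (hP : fclosed P) (a : V) (x : @lsub V D W P hP) : @lsub V D W P hP :=
  exist _ _ (hP.2.2 a _ (proj2_sig x)).
Definition lopp (V : pzRingType) (D : Type) (W : lmodType V) (P : (D -> W) -> Prop) (hP : fclosed P) (x : @lsub V D W P hP) : @lsub V D W P hP := lscale (-1) x.

Lemma laddA (V : pzRingType) (D : Type) (W : lmodType V) (P : (D -> W) -> Prop) (hP : fclosed P) : associative (@ladd V D W P hP).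
Proof. by move=> x y z; apply: lsub_eq => d /=; rewrite addrA. Qed.
Lemma laddC (V : pzRingType) (D : Type) (W : lmodType V) (P : (D -> W) -> Prop) (hP : fclosed P) : commutative (@ladd V D W P hP).
Proof. by move=> x y; apply: lsub_eq => d /=; rewrite addrC. Qed.
Lemma ladd0 (V : pzRingType) (D : Type) (W : lmodType V) (P : (D -> W) -> Prop) (hP : fclosed P) : left_id (@lzero V D W P hP) (@ladd V D W P hP).
Proof. by move=> x; apply: lsub_eq => d /=; rewrite add0r. Qed.
Lemma laddN (V : pzRingType) (D : Type) (W : lmodType V) (P : (D -> W) -> Prop) (hP : fclosed P) : left_inverse (@lzero V D W P hP) (@lopp V D W P hP) (@ladd V D W P hP).
Proof. by move=> x; apply: lsub_eq => d /=; rewrite scaleN1r addNr. Qed.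

HB.instance Definition _ (V : pzRingType) (D : Type) (W : lmodType V) (P : (D -> W) -> Prop) (hP : fclosed P) := GRing.isZmodule.Build (@lsub V D W P hP)
  (@laddA V D W P hP) (@laddC V D W P hP) (@ladd0 V D W P hP) (@laddN V D W P hP).

Lemma lscaleA (V : pzRingType) (D : Type) (W : lmodType V) (P : (D -> W) -> Prop) (hP : fclosed P) a b (v : @lsub V D W P hP) : lscale a (lscale b v) = lscale (a * b) v.
Proof. by apply: lsub_eq => d /=; rewrite scalerA. Qed.
Lemma lscale1 (V : pzRingType) (D : Type) (W : lmodType V) (P : (D -> W) -> Prop) (hP : fclosed P) : left_id 1 (@lscale V D W P hP).
Proof. by move=> x; apply: lsub_eq => d /=; rewrite scale1r. Qed.
Lemma lscaleDr (V : pzRingType) (D : Type) (W : lmodType V) (P : (D -> W) -> Prop) (hP : fclosed P) : right_distributive (@lscale V D W P hP) +%R.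
Proof. by move=> a x y; apply: lsub_eq => d /=; rewrite scalerDr. Qed.
Lemma lscaleDl (V : pzRingType) (D : Type) (W : lmodType V) (P : (D -> W) -> Prop) (hP : fclosed P) (v : @lsub V D W P hP) : forall a b : V, lscale (a + b) v = lscale a v + lscale b v.
Proof. by move=> a b; apply: lsub_eq => d /=; rewrite scalerDl. Qed.

HB.instance Definition _ (V : pzRingType) (D : Type) (W : lmodType V) (P : (D -> W) -> Prop) (hP : fclosed P) := GRing.Zmodule_isLmodule.Build V (@lsub V D W P hP)
  (@lscaleA V D W P hP) (@lscale1 V D W P hP) (@lscaleDr V D W P hP) (@lscaleDl V D W P hP).

Lemma lsub_addE (V : pzRingType) (D : Type) (W : lmodType V) (P : (D -> W) -> Prop) (hP : fclosed P) (x y : @lsub V D W P hP) d : proj1_sig (x + y) d = proj1_sig x d + proj1_sig y d.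
Proof. by []. Qed.
Lemma lsub_scaleE (V : pzRingType) (D : Type) (W : lmodType V) (P : (D -> W) -> Prop) (hP : fclosed P) a (x : @lsub V D W P hP) d : proj1_sig (a *: x) d = a *: proj1_sig x d.
Proof. by []. Qed.
Lemma lsub_zeroE (V : pzRingType) (D : Type) (W : lmodType V) (P : (D -> W) -> Prop) (hP : fclosed P) d : proj1_sig (0 : @lsub V D W P hP) d = 0.
Proof. by []. Qed.
Lemma lsub_lin (V : pzRingType) (D : Type) (W : lmodType V) (P : (D -> W) -> Prop) (hP : fclosed P) d : is_linear (fun x : @lsub V D W P hP => proj1_sig x d).
Proof. by []. Qed.

Definition PT (V : pzRingType) (X Y T : lmodType V) (t : X -> Y -> T) :=
  ptens t (fun _ => True) (fun _ => True).

Lemma tensor_spanned (V : pzRingType) (X Y T : lmodType V) (t : X -> Y -> T) :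
  is_tensor_product t -> forall z, span (PT t) z.
Proof.
move=> [hbil hu].
pose P := fun f : unit -> T => span (PT t) (f tt).
have hP : fclosed P.
  split; first exact: span_zero.
  by split; [move=> f g hf hg; apply: span_add | move=> a f hf; apply: span_scale].
pose W := @lsub V unit T P hP.
have hf : forall r s, P (fun _ => t r s) by move=> r s; apply: span_in; exists r, s.
pose f := fun r s => (exist _ _ (hf r s) : W).
have hfb : is_bilinear f.
  split.
  - by move=> x a u v; apply: lsub_eq => d /=; rewrite (hbil.1 x).
  - by move=> y a u v; apply: lsub_eq => d /=; rewrite (hbil.2 y).
have [g [hg [hgf _]]] := hu W f hfb.
have [g0 [hg0 [hg0f hg0u]]] := hu T t hbil.
have e1 : forall z, proj1_sig (g z) tt = g0 z.
  apply: hg0u; first exact: (lin_comp hg (@lsub_lin _ _ _ _ hP tt)).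
  by move=> x y; rewrite hgf.
have e2 : forall z, z = g0 z by apply: hg0u.
by move=> z; rewrite (e2 z) -e1; apply: (proj2_sig (g z)).
Qed.


Definition Tb (V : pzRingType) (X Y T : lmodType V) (BX : (X -> Prop) -> Prop)
  (BY : (Y -> Prop) -> Prop) (t : X -> Y -> T) (A : T -> Prop) : Prop :=
  exists S U, is_submod S /\ BX S /\ is_submod U /\ BY U /\ incl A (span (ptens t S U)).

Lemma ptens_mono (V : pzRingType) (X Y T : lmodType V) (t : X -> Y -> T) S U S' U' :
  incl S S' -> incl U U' -> incl (ptens t S U) (ptens t S' U').
Proof. by move=> h1 h2 _ [s [u [hs [hu ->]]]]; exists s, u; split; [apply: h1|split; [apply: h2|]]. Qed.

Lemma Tb_union (V : pzRingType) (X Y T : lmodType V) BX BY (t : X -> Y -> T) A A' :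
  is_convex_bornology BX -> is_convex_bornology BY ->
  Tb BX BY t A -> Tb BX BY t A' -> Tb BX BY t (fun x => A x \/ A' x).
Proof.
move=> hX hY [S [U [hS [hbS [hU [hbU hA]]]]]] [S' [U' [hS' [hbS' [hU' [hbU' hA']]]]]].
exists (span (fun x => S x \/ S' x)), (span (fun x => U x \/ U' x)).
split; first exact: span_submod. split; first by apply: born_span => //; apply: born_union.
split; first exact: span_submod. split; first by apply: born_span => //; apply: born_union.
move=> x [/hA|/hA'] hx; apply: (span_mono _ hx); apply: ptens_mono => y hy; apply: span_in; by [left|right].
Qed.

Lemma Tb_sub (V : pzRingType) (X Y T : lmodType V) BX BY (t : X -> Y -> T) A A' :
  Tb BX BY t A -> incl A' A -> Tb BX BY t A'.
Proof.
move=> [S [U [hS [hbS [hU [hbU hA]]]]]] h; exists S, U; do 4 (split => //).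
by move=> x /h /hA.
Qed.

Lemma Tb_span (V : pzRingType) (X Y T : lmodType V) BX BY (t : X -> Y -> T) A :
  Tb BX BY t A -> Tb BX BY t (span A).
Proof.
move=> [S [U [hS [hbS [hU [hbU hA]]]]]]; exists S, U; do 4 (split => //).
by move=> x hx; apply: span_idem; apply: (span_mono hA).
Qed.

Lemma Tb_single (V : pzRingType) (X Y T : lmodType V) BX BY (t : X -> Y -> T) z :
  is_convex_bornology BX -> is_convex_bornology BY -> is_tensor_product t ->
  Tb BX BY t (fun y => y = z).
Proof.
move=> hX hY ht; have := tensor_spanned ht z; elim.
- exists (span (fun _ => False)), (span (fun _ => False)).
  split; first exact: span_submod. split; first by apply: born_span => //; apply: born_empty.
  split; first exact: span_submod. split; first by apply: born_span => //; apply: born_empty.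
  by move=> y ->; apply: span_zero.
- move=> _ [r [s [_ [_ ->]]]].
  exists (span (fun x => x = r)), (span (fun x => x = s)).
  split; first exact: span_submod. split; first by apply: born_span => //; apply: born_single.
  split; first exact: span_submod. split; first by apply: born_span => //; apply: born_single.
  by move=> y ->; apply: span_in; exists r, s; split; [apply: span_in|split; [apply: span_in|]].
- move=> x y _ hx _ hy; apply: (Tb_sub (Tb_span (Tb_union hX hY hx hy))) => w ->.
  by apply: span_add; apply: span_in; [left|right].
- move=> a x _ hx; apply: (Tb_sub (Tb_span hx)) => w ->.
  by apply: span_scale; apply: span_in.
Qed.

Lemma Tb_convex (V : pzRingType) (X Y T : lmodType V) BX BY (t : X -> Y -> T) :
  is_convex_bornology BX -> is_convex_bornology BY -> is_tensor_product t ->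
  is_convex_bornology (Tb BX BY t).
Proof.
move=> hX hY ht; split.
  move=> A [s hs]; apply: (Tb_sub _ hs); elim: s {hs} => [|z s IH].
    apply: (Tb_sub (Tb_single 0 hX hY ht)) => x; by rewrite in_nil.
  apply: (Tb_sub (Tb_union hX hY (Tb_single z hX hY ht) IH)) => x.
  by rewrite inE => /orP [/eqP ->|h]; [left|right].
split; first by move=> A A' hA h; apply: Tb_sub hA h.
split; first by move=> A A' hA hA'; apply: Tb_union.
by move=> A hA; apply: Tb_span.
Qed.

Lemma tensorE (V : pzRingType) (X Y T : lmodType V) BX BY (t : X -> Y -> T) A :
  is_convex_bornology BX -> is_convex_bornology BY -> is_tensor_product t ->
  tensor_bornology BX BY t A <-> Tb BX BY t A.
Proof.
move=> hX hY ht; split.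
  move=> hA; apply: hA; first exact: Tb_convex.
  move=> S U hS hbS hU hbU; exists S, U; do 4 (split => //).
move=> [S [U [hS [hbS [hU [hbU hA]]]]]].
apply: (born_sub (tensor_convex BX BY t)); last exact: hA.
exact: tensor_gen.
Qed.

Lemma mul_span (V : pzRingType) (T : algType V) (A A' : T -> Prop) (C : T -> Prop) :
  is_submod C -> (forall a b, A a -> A' b -> C (a * b)) ->
  forall a b, span A a -> span A' b -> C (a * b).
Proof.
move=> hC h a b ha hb; elim: ha b hb.
- by move=> b _; rewrite mul0r; apply: hC.1.
- move=> x hx b; elim.
  + by rewrite mulr0; apply: hC.1.
  + by move=> y hy; apply: h.
  + by move=> y z _ hy _ hz; rewrite mulrDr; apply: hC.2.1.
  + by move=> c y _ hy; rewrite -scalerAr; apply: hC.2.2.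
- by move=> x y _ hx _ hy b hb; rewrite mulrDl; apply: hC.2.1; [apply: hx|apply: hy].
- by move=> c x _ hx b hb; rewrite -scalerAl; apply: hC.2.2; apply: hx.
Qed.

Lemma tens_mul (V : pzRingType) (R S T : algType V) (t : R -> S -> T) A B A' B' :
  is_tensor_algebra t ->
  incl (setmul (span (ptens t A B)) (span (ptens t A' B')))
       (span (ptens t (span (setmul A A')) (span (setmul B B')))).
Proof.
move=> [_ [_ hm]] _ [a [b [ha [hb ->]]]]; apply: (mul_span (span_submod _) _ ha hb).
move=> _ _ [s [u [hs [hu ->]]]] [s' [u' [hs' [hu' ->]]]]; rewrite hm.
apply: span_in; exists (s * s'), (u * u'); split; first by apply: span_in; exists s, s'.
by split => //; apply: span_in; exists u, u'.
Qed.

Lemma Tb_alg (V : pzRingType) (R S T : algType V) BX BY (t : R -> S -> T) :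
  is_alg_bornology BX -> is_alg_bornology BY -> is_tensor_algebra t ->
  is_alg_bornology (Tb BX BY t).
Proof.
move=> hX hY ht; split; first exact: (Tb_convex hX.1 hY.1 ht.1).
move=> A A' [S1 [U [hS [hbS [hU [hbU hA]]]]]] [S' [U' [hS' [hbS' [hU' [hbU' hA']]]]]].
exists (span (setmul S1 S')), (span (setmul U U')).
split; first exact: span_submod. split; first by apply: born_span hX.1 _; apply: alg_mul.
split; first exact: span_submod. split; first by apply: born_span hY.1 _; apply: alg_mul.
move=> _ [a [b [ha [hb ->]]]]; apply: (tens_mul ht); exists a, b; split; first exact: hA.
by split; [apply: hA'|].
Qed.


Lemma img_pimul (V : pzRingType) (X Y : lmodType V) (f : X -> Y) pi k A :
  is_linear f -> incl (img f (pimul pi k A)) (pimul pi k (img f A)).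
Proof.
move=> hf _ [x [[y [hy ->]] ->]]; exists (f y); split; first by exists y.
by rewrite linZ.
Qed.

Lemma img_setmul (V : pzRingType) (R T : algType V) (f : R -> T) A A' :
  is_alg_hom f -> incl (img f (setmul A A')) (setmul (img f A) (img f A')).
Proof.
move=> [_ [_ hm]] _ [x [[a [b [ha [hb ->]]]] ->]]; exists (f a), (f b).
by split; [exists a|split; [exists b|rewrite hm]].
Qed.

Lemma img_mpow (V : pzRingType) (R T : algType V) (f : R -> T) M n :
  is_alg_hom f -> incl (img f (mpow M n)) (mpow (img f M) n).
Proof.
move=> hf; elim: n => [|n IH] /=.
  move=> y /(lin_span hf.1) hy; apply: (span_mono _ hy) => _ [x [-> ->]].
  by rewrite hf.2.1.
move=> y /(lin_span hf.1) hy; apply: (span_mono _ hy) => z /(img_setmul hf) [a [b [ha [hb ->]]]].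
by exists a, b; split; [apply: IH|].
Qed.

Definition pullb (V : pzRingType) (R T : algType V) (f : R -> T) (B : (T -> Prop) -> Prop) :=
  fun A => B (img f A).

Lemma pullb_alg (V : pzRingType) (R T : algType V) (f : R -> T) (B : (T -> Prop) -> Prop) :
  is_alg_hom f -> is_alg_bornology B -> is_alg_bornology (pullb f B).
Proof.
move=> hf hB; have hc := hB.1; split; first split.
- move=> A [s hs]; apply: (born_sub hc (born_fin (map f s) hc)).
  by move=> _ [x [hx ->]]; apply: map_f; apply: hs.
split; first by move=> A A' hA h; apply: (born_sub hc hA); apply: img_mono.
split.
  move=> A A' hA hA'; apply: (born_sub hc (born_union hc hA hA')).
  by move=> _ [x [[hx|hx] ->]]; [left|right]; exists x.
- move=> A hA; apply: (born_sub hc (born_span hc hA)); exact: lin_span hf.1.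
- move=> A A' hA hA'; apply: (born_sub hc (alg_mul hB hA hA')); exact: img_setmul.
Qed.

Lemma pullb_rho (V : pzRingType) (R T : algType V) (f : R -> T) (B : (T -> Prop) -> Prop)
  pi eps M :
  is_alg_hom f -> is_alg_bornology B -> is_submod M ->
  rho_le1 pi eps B (img f M) -> rho_le1 pi eps (pullb f B) M.
Proof.
move=> hf hB hM hrho r hr; have hc := hB.1.
apply: (born_sub hc (hrho r hr)).
move=> y /(lin_span hf.1) hy; apply: (span_mono _ hy) => _ [x [[n hn] ->]].
exists n.
have [y' [hy' e]] := img_pimul hf.1 (ex_intro _ x (conj hn erefl)).
by exists y'; split; [exact: img_mpow hf _ hy'|exact: e].
Qed.

Lemma mpow_born (V : pzRingType) (R : algType V) (B : (R -> Prop) -> Prop) S n :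
  is_alg_bornology B -> B S -> B (mpow S n).
Proof.
move=> hB hS; elim: n => [|n IH] /=.
  by apply: born_span hB.1 _; apply: born_single hB.1.
by apply: born_span hB.1 _; apply: alg_mul.
Qed.

Lemma mpow_tens (V : pzRingType) (R S T : algType V) (t : R -> S -> T) M S1 U n :
  is_tensor_algebra t -> incl M (span (ptens t S1 U)) ->
  incl (mpow M n) (span (ptens t (mpow S1 n) (mpow U n))).
Proof.
move=> ht hM; elim: n => [|n IH] /=.
  apply: span_min; first exact: span_submod.
  move=> _ ->; apply: span_in; exists 1, 1; split; first exact: span_in.
  by split; [exact: span_in| rewrite ht.2.1].
apply: span_min; first exact: span_submod.
move=> _ [a [b [ha [hb ->]]]]; apply: (tens_mul ht); exists a, b.
by split; [apply: IH|split; [apply: hM|]].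
Qed.

Lemma tens_lin1 (V : pzRingType) (R S T : algType V) (t : R -> S -> T) u :
  is_tensor_algebra t -> is_linear (fun x => t x u).
Proof. by move=> ht; apply: ht.1.1.2. Qed.
Lemma tens_lin2 (V : pzRingType) (R S T : algType V) (t : R -> S -> T) x :
  is_tensor_algebra t -> is_linear (t x).
Proof. by move=> ht; apply: ht.1.1.1. Qed.

Lemma Tb_rho (V : idomainType) (R S T : algType V) (BX : (R -> Prop) -> Prop)
  (BY : (S -> Prop) -> Prop) (t : R -> S -> T) (pi : V) (eps : Rdefinitions.R) :
  Rdefinitions.Rlt (Rdefinitions.IZR BinNums.Z0) eps ->
  Rdefinitions.Rlt eps (Rdefinitions.IZR (BinNums.Zpos BinNums.xH)) ->
  is_alg_bornology BX -> is_alg_bornology BY -> is_tensor_algebra t ->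
  (forall S1, is_submod S1 -> BX S1 -> rho_le1 pi eps BX S1) ->
  (forall U, is_submod U -> BY U -> rho_le1 pi eps BY U) ->
  forall M, is_submod M -> Tb BX BY t M -> rho_le1 pi eps (Tb BX BY t) M.
Proof.
move=> heps0 heps1 hX hY ht hrX hrY M hM [S1 [U [hS [hbS [hU [hbU hMs]]]]]] r hr.
have [r1 [hr1 [N hN]]] := @lg_exp_split eps r heps0 heps1 hr.
pose a := lg_exp eps r1; pose e := lg_exp eps r.
have hN' : forall n, (N <= n)%N -> (2 * a n <= e n)%N.
  by move=> n /leP hn; apply/leP; apply: hN.
pose XS := span (fun x => exists n, pimul pi (a n) (mpow S1 n) x).
pose XU := span (fun x => exists n, pimul pi (a n) (mpow U n) x).
pose S' := span (fun x => XS x \/ exists n, (n < N)%N /\ mpow S1 n x).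
pose U' := span (fun x => XU x \/ exists n, (n < N)%N /\ mpow U n x).
exists S', U'.
split; first exact: span_submod.
split.
  apply: born_span hX.1 _; apply: born_union hX.1 _ _; first exact: hrX.
  by apply: born_finunion hX.1 _ => n _; apply: mpow_born.
split; first exact: span_submod.
split.
  apply: born_span hY.1 _; apply: born_union hY.1 _ _; first exact: hrY.
  by apply: born_finunion hY.1 _ => n _; apply: mpow_born.
apply: span_min; first exact: span_submod.
move=> _ [n [y [hy ->]]].
have hy' := mpow_tens ht hMs hy.
pose C := fun y => span (ptens t S' U') (pi ^+ e n *: y).
have hC : is_submod C.
  split; first by rewrite /C scaler0; apply: span_zero.
  split; first by move=> u v hu hv; rewrite /C scalerDr; apply: span_add.
  by move=> c u hu; rewrite /C scalerA mulrC -scalerA; apply: span_scale.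
apply: (span_min hC _ hy') => _ [s [u [hs [hu ->]]]].
rewrite /C; case: (ltnP n N) => hnN.
  rewrite -(linZ _ _ (tens_lin2 s ht)); apply: span_in; exists s, (pi ^+ e n *: u).
  split; first by apply: span_in; right; exists n.
  by split => //; apply: span_scale; apply: span_in; right; exists n.
have h2 := hN' n hnN.
have ha : (a n <= e n)%N by apply: leq_trans h2; rewrite leq_pmull.
have ha2 : (a n <= e n - a n)%N by rewrite leq_subRL // addnn -mul2n.
rewrite -(subnKC ha) exprD -scalerA -(linZ _ _ (tens_lin2 s ht)).
rewrite -(linZ _ _ (tens_lin1 _ ht)).
apply: span_in; exists (pi ^+ a n *: s), (pi ^+ (e n - a n) *: u).
split; first by apply: span_in; left; apply: span_in; exists n; exists s.
split => //.
rewrite -(subnK ha2) exprD -scalerA; apply: span_scale; apply: span_in; left.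
by apply: span_in; exists n; exists u.
Qed.


Lemma tens_hom1 (V : pzRingType) (R S T : algType V) (t : R -> S -> T) :
  is_tensor_algebra t -> is_alg_hom (fun x => t x 1).
Proof.
move=> ht; split; first exact: tens_lin1.
split; first exact: ht.2.1.
by move=> x y; rewrite ht.2.2 mulr1.
Qed.

Lemma tens_hom2 (V : pzRingType) (R S T : algType V) (t : R -> S -> T) :
  is_tensor_algebra t -> is_alg_hom (t 1).
Proof.
move=> ht; split; first exact: tens_lin2.
split; first exact: ht.2.1.
by move=> x y; rewrite ht.2.2 mulr1.
Qed.

Lemma part1a (V : pzRingType) (R S T : algType V) (pi : V) eps
  (BR : (R -> Prop) -> Prop) (BS : (S -> Prop) -> Prop) (t : R -> S -> T) A :
  is_alg_bornology BR -> is_alg_bornology BS -> is_tensor_algebra t ->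
  tensor_bornology (lg_bornology pi eps BR) (lg_bornology pi eps BS) t A ->
  lg_bornology pi eps (tensor_bornology BR BS t) A.
Proof.
move=> hBR hBS ht hA; apply: hA; first exact: (lg_alg _ _ _).1.
move=> S1 U hS hbS hU hbU B' hB' h1 h2.
have hf1 := tens_hom1 ht; have hf2 := tens_hom2 ht.
have hS1 : pullb (fun x => t x 1) B' S1.
  apply: hbS; first exact: pullb_alg.
    move=> A0 hA0; rewrite /pullb; apply: h1.
    have hT : tensor_bornology BR BS t (span (ptens t (span A0) (span (fun y => y = 1)))).
      apply: tensor_gen; try exact: span_submod.
      - exact: born_span hBR.1 hA0.
      - exact: born_span hBS.1 (born_single 1 hBS.1).
    apply: (born_sub (tensor_convex BR BS t) hT).
    by move=> _ [x [hx ->]]; apply: span_in; exists x, 1; split; [apply: span_in|split; [apply: span_in|]].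
  move=> M hM hbM; apply: pullb_rho => //; apply: h2 => //; exact: img_submod hf1.1 hM.
have hU1 : pullb (t 1) B' U.
  apply: hbU; first exact: pullb_alg.
    move=> A0 hA0; rewrite /pullb; apply: h1.
    have hT : tensor_bornology BR BS t (span (ptens t (span (fun y => y = 1)) (span A0))).
      apply: tensor_gen; try exact: span_submod.
      - exact: born_span hBR.1 (born_single 1 hBR.1).
      - exact: born_span hBS.1 hA0.
    apply: (born_sub (tensor_convex BR BS t) hT).
    by move=> _ [x [hx ->]]; apply: span_in; exists 1, x; split; [apply: span_in|split; [apply: span_in|]].
  move=> M hM hbM; apply: pullb_rho => //; apply: h2 => //; exact: img_submod hf2.1 hM.
apply: (born_sub hB'.1 (born_span hB'.1 (alg_mul hB' hS1 hU1))).
apply: span_mono => _ [s [u [hs [hu ->]]]]; exists (t s 1), (t 1 u).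
by split; [exists s|split; [exists u|rewrite ht.2.2 mulr1 mul1r]].
Qed.

Lemma part1b (V : idomainType) (R S T : algType V) (pi : V) eps
  (BR : (R -> Prop) -> Prop) (BS : (S -> Prop) -> Prop) (t : R -> S -> T) A :
  Rdefinitions.Rlt (Rdefinitions.IZR BinNums.Z0) eps ->
  Rdefinitions.Rlt eps (Rdefinitions.IZR (BinNums.Zpos BinNums.xH)) ->
  is_alg_bornology BR -> is_alg_bornology BS -> is_tensor_algebra t ->
  lg_bornology pi eps (tensor_bornology BR BS t) A ->
  tensor_bornology (lg_bornology pi eps BR) (lg_bornology pi eps BS) t A.
Proof.
move=> heps0 heps1 hBR hBS ht hA.
have hlR := lg_alg pi eps BR; have hlS := lg_alg pi eps BS.
have E : tensor_bornology (lg_bornology pi eps BR) (lg_bornology pi eps BS) t =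
         Tb (lg_bornology pi eps BR) (lg_bornology pi eps BS) t.
  by apply: funext => A0; apply: propext; apply: tensorE hlR.1 hlS.1 ht.1.
rewrite E; apply: hA.
- exact: Tb_alg.
- move=> A0 hA0; rewrite -E; apply: tensor_mono hA0 => A1; exact: lg_incl.
- apply: Tb_rho => //; exact: lg_rho.
Qed.


Definition Pl (V : pzRingType) (D : Type) (W : lmodType V) (BW : (W -> Prop) -> Prop)
  (A : D -> Prop) (f : D -> W) : Prop :=
  (forall d, ~ A d -> f d = 0) /\ BW (img f A).

Lemma Pl_closed (V : pzRingType) (D : Type) (W : lmodType V) (BW : (W -> Prop) -> Prop)
  (A : D -> Prop) : is_convex_bornology BW -> fclosed (Pl BW A).
Proof.
move=> hW; split.
  split => //; apply: (born_sub hW (born_single 0 hW)) => _ [d [_ ->]] //.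
split.
  move=> f g [hf0 hf] [hg0 hg]; split; first by move=> d hd; rewrite hf0 // hg0 // addr0.
  apply: (born_sub hW (born_span hW (born_union hW hf hg))) => _ [d [hd ->]].
  by apply: span_add; apply: span_in; [left|right]; exists d.
move=> a f [hf0 hf]; split; first by move=> d hd; rewrite hf0 // scaler0.
apply: (born_sub hW (born_span hW hf)) => _ [d [hd ->]].
by apply: span_scale; apply: span_in; exists d.
Qed.

Definition linf (V : pzRingType) (D : Type) (W : lmodType V) (BW : (W -> Prop) -> Prop)
  (A : D -> Prop) (hW : is_convex_bornology BW) := lsub (Pl_closed A hW).

Definition lunion (V : pzRingType) (D : Type) (W : lmodType V) (BW : (W -> Prop) -> Prop)
  (A : D -> Prop) (hW : is_convex_bornology BW) (F : linf A hW -> Prop) : W -> Prop :=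
  fun w => exists f, F f /\ exists d, A d /\ w = proj1_sig f d.

Definition Bl (V : pzRingType) (D : Type) (W : lmodType V) (BW : (W -> Prop) -> Prop)
  (A : D -> Prop) (hW : is_convex_bornology BW) : (linf A hW -> Prop) -> Prop :=
  fun F => BW (lunion F).
Arguments Bl {V D W BW} A hW.

Lemma Bl_convex (V : pzRingType) (D : Type) (W : lmodType V) (BW : (W -> Prop) -> Prop)
  (A : D -> Prop) (hW : is_convex_bornology BW) : is_convex_bornology (Bl A hW).
Proof.
split.
  move=> F [s hs]; rewrite /Bl.
  have : BW (fun w => exists f, f \in s /\ exists d, A d /\ w = proj1_sig f d).
    elim: s {hs} => [|f s IH].
      by apply: (born_sub hW (born_empty hW)) => w [f [/[!in_nil] []]].
    apply: (born_sub hW (born_union hW (proj2_sig f).2 IH)).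
    move=> w [g [/[!inE] /orP [/eqP ->|hg] [d [hd ->]]]]; first by left; exists d.
    by right; exists g; split => //; exists d.
  move=> h; apply: (born_sub hW h) => w [f [hf hd]]; exists f; split => //; exact: hs.
split.
  by move=> F F' hF h; apply: (born_sub hW hF) => w [f [hf hd]]; exists f; split => //; apply: h.
split.
  move=> F F' hF hF'; apply: (born_sub hW (born_union hW hF hF')).
  by move=> w [f [[hf|hf] hd]]; [left|right]; exists f.
move=> F hF; apply: (born_sub hW (born_span hW hF)).
move=> w [f [hf [d [hd ->]]]]; elim: hf.
- by rewrite lsub_zeroE; apply: span_zero.
- by move=> g hg; apply: span_in; exists g; split => //; exists d.
- by move=> g h _ hg _ hh; rewrite lsub_addE; apply: span_add.
- by move=> a g _ hg; rewrite lsub_scaleE; apply: span_scale.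
Qed.

Lemma Bl_eval (V : pzRingType) (D : Type) (W : lmodType V) (BW : (W -> Prop) -> Prop)
  (A : D -> Prop) (hW : is_convex_bornology BW) d :
  bounded_map (Bl A hW) BW (fun f : linf A hW => proj1_sig f d).
Proof.
move=> F hF; apply: (born_sub hW (born_union hW hF (born_single 0 hW))).
move=> _ [f [hf ->]]; case: (pselect (A d)) => hd.
  by left; exists f; split => //; exists d.
by right; apply: (proj2_sig f).1.
Qed.

Lemma linf_complete (V : pzRingType) (D : Type) (W : lmodType V) (BW : (W -> Prop) -> Prop)
  (A : D -> Prop) (hW : is_convex_bornology BW) (pi : V) :
  is_complete pi BW -> is_complete pi (Bl A hW).
Proof.
move=> hc F hF; have [M [hM [hbM [hUM [hsep hcpl]]]]] := hc _ hF.
pose Ml := fun f : linf A hW => forall d, A d -> M (proj1_sig f d).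
exists Ml; split.
  split; first by move=> d _; rewrite lsub_zeroE; apply: hM.1.
  split; first by move=> f g hf hg d hd; rewrite lsub_addE; apply: hM.2.1; [apply: hf|apply: hg].
  by move=> a f hf d hd; rewrite lsub_scaleE; apply: hM.2.2; apply: hf.
split.
  by apply: (born_sub hW hbM) => w [f [hf [d [hd ->]]]]; apply: hf.
split.
  by move=> f hf d hd; apply: hUM; exists f; split => //; exists d.
split.
  move=> f hf hn; apply: lsub_eq => d; rewrite lsub_zeroE.
  case: (pselect (A d)) => hd; last by apply: (proj2_sig f).1.
  apply: hsep; first exact: hf.
  move=> n; have [y [hy ->]] := hn n; exists (proj1_sig y d); split; first exact: hy.
  by rewrite lsub_scaleE.
move=> s hs hdiff.
have hlim : forall d, exists x : W, (A d -> M x /\ forall n, exists y, M y /\ x - proj1_sig (s n) d = pi ^+ n *: y)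
    /\ (~ A d -> x = 0).
  move=> d; case: (pselect (A d)) => hd; last by exists 0; split.
  have [x [hx hxn]] : exists x, M x /\ forall n, exists y, M y /\ x - proj1_sig (s n) d = pi ^+ n *: y.
    apply: hcpl; first by move=> n; apply: hs.
    move=> n; have [y [hy e]] := hdiff n; exists (proj1_sig y d); split; first exact: hy.
    by rewrite -lsub_scaleE -e lsub_addE -scaleN1r lsub_scaleE scaleN1r.
  by exists x; split.
have [g hg] := choice hlim.
have hgP : Pl BW A g.
  split; first by move=> d hd; apply: (hg d).2.
  by apply: (born_sub hW hbM) => _ [d [hd ->]]; apply: ((hg d).1 hd).1.
pose gl := (exist _ g hgP : linf A hW).
exists gl; split; first by move=> d hd; apply: ((hg d).1 hd).1.
move=> n.
have hz : forall d, exists z : W, (A d -> M z /\ g d - proj1_sig (s n) d = pi ^+ n *: z) /\ (~ A d -> z = 0).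
  move=> d; case: (pselect (A d)) => hd; last by exists 0; split.
  have [z [hz e]] := ((hg d).1 hd).2 n; by exists z; split.
have [z hzf] := choice hz.
have hzP : Pl BW A z.
  split; first by move=> d hd; apply: (hzf d).2.
  by apply: (born_sub hW hbM) => _ [d [hd ->]]; apply: ((hzf d).1 hd).1.
exists (exist _ z hzP : linf A hW); split; first by move=> d hd; apply: ((hzf d).1 hd).1.
apply: lsub_eq => d; rewrite lsub_scaleE lsub_addE -scaleN1r lsub_scaleE scaleN1r /=.
case: (pselect (A d)) => hd; first exact: ((hzf d).1 hd).2.
rewrite (hg d).2 // (proj2_sig (s n)).1 // (hzf d).2 //.
by rewrite subr0 scaler0.
Qed.


Lemma bounded_comp (V : pzRingType) (X Y Z : lmodType V) BX BY (BZ : (Z -> Prop) -> Prop)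
  (f : X -> Y) (g : Y -> Z) :
  is_convex_bornology BZ -> bounded_map BX BY f -> bounded_map BY BZ g ->
  bounded_map BX BZ (fun x => g (f x)).
Proof.
move=> hZ hf hg A hA; apply: (born_sub hZ (hg _ (hf _ hA))).
by move=> _ [x [hx ->]]; exists (f x); split => //; exists x.
Qed.

Lemma bounded_id (V : pzRingType) (X : lmodType V) (BX : (X -> Prop) -> Prop) :
  is_convex_bornology BX -> bounded_map BX BX (fun x => x).
Proof. by move=> hX A hA; apply: (born_sub hX hA) => _ [x [hx ->]]. Qed.

Lemma comp_ext (V : pzRingType) (X C : lmodType V) pi BX BC (j : X -> C)
  (W : lmodType V) (BW : (W -> Prop) -> Prop) (f : X -> W) :
  is_completion pi BX BC j -> is_convex_bornology BW -> is_complete pi BW ->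
  is_linear f -> bounded_map BX BW f ->
  exists g : C -> W, is_linear g /\ bounded_map BC BW g /\ (forall x, g (j x) = f x).
Proof.
move=> [_ [_ [_ [_ hu]]]] hW hWc hf hfb.
have [g [hg [hgb [hgj _]]]] := hu W BW f hW hWc hf hfb; by exists g.
Qed.

Lemma comp_uniq (V : pzRingType) (X C : lmodType V) pi BX BC (j : X -> C)
  (W : lmodType V) (BW : (W -> Prop) -> Prop) (g1 g2 : C -> W) :
  is_completion pi BX BC j -> is_convex_bornology BW -> is_complete pi BW ->
  is_linear g1 -> bounded_map BC BW g1 -> is_linear g2 -> bounded_map BC BW g2 ->
  (forall x, g1 (j x) = g2 (j x)) -> forall z, g1 z = g2 z.
Proof.
move=> hC hW hWc hg1 hb1 hg2 hb2 e.
have [_ [_ [hj [hjb hu]]]] := hC.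
have [g [hg [hgb [hgj hgu]]]] := hu W BW (fun x => g1 (j x)) hW hWc (lin_comp hj hg1)
  (bounded_comp hW hjb hb1).
by move=> z; rewrite (hgu g1 hg1 hb1 (fun x => erefl)) (hgu g2 hg2 hb2 (fun x => esym (e x))).
Qed.

Lemma tens_uniq (V : pzRingType) (X Y T W : lmodType V) (t : X -> Y -> T) (g1 g2 : T -> W) :
  is_tensor_product t -> is_linear g1 -> is_linear g2 ->
  (forall x y, g1 (t x y) = g2 (t x y)) -> forall z, g1 z = g2 z.
Proof.
move=> [hb hu] hg1 hg2 e.
have hfb : is_bilinear (fun x y => g1 (t x y)).
  by split; [move=> x; exact: lin_comp (hb.1 x) hg1 | move=> y; exact: lin_comp (hb.2 y) hg1].
have [g [hg [hgf hgu]]] := hu W _ hfb.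
by move=> z; rewrite (hgu g1 hg1 (fun x y => erefl)) (hgu g2 hg2 (fun x y => esym (e x y))).
Qed.

Lemma tens_ext (V : pzRingType) (X Y T W : lmodType V) (t : X -> Y -> T) (f : X -> Y -> W) :
  is_tensor_product t -> is_bilinear f ->
  exists g : T -> W, is_linear g /\ forall x y, g (t x y) = f x y.
Proof. move=> [hb hu] hf; have [g [hg [hgf _]]] := hu W f hf; by exists g. Qed.

Lemma linf_map (V : pzRingType) (X : lmodType V) (BX : (X -> Prop) -> Prop) (D : Type)
  (W : lmodType V) (BW : (W -> Prop) -> Prop) (A : D -> Prop) (hW : is_convex_bornology BW)
  (F : X -> D -> W) :
  (forall x, Pl BW A (F x)) ->
  (forall a u v d, F (a *: u + v) d = a *: F u d + F v d) ->
  (forall A0, BX A0 -> BW (fun w => exists x d, A0 x /\ A d /\ w = F x d)) ->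
  exists Phi : X -> linf A hW, is_linear Phi /\ bounded_map BX (Bl A hW) Phi /\
    forall x d, proj1_sig (Phi x) d = F x d.
Proof.
move=> hP hlin hb.
exists (fun x => exist _ (F x) (hP x) : linf A hW); split.
  by move=> a u v; apply: lsub_eq => d /=; rewrite hlin.
split => //.
move=> A0 hA0; apply: (born_sub hW (hb _ hA0)).
by move=> w [_ [[x [hx ->]] [d [hd ->]]]]; exists x, d.
Qed.

Lemma lmul_lin (V : pzRingType) (R : algType V) (c : R) : is_linear (fun y : R => c * y).
Proof. by move=> a u v; rewrite mulrDr scalerAr. Qed.
Lemma rmul_lin (V : pzRingType) (R : algType V) (c : R) : is_linear (fun y : R => y * c).
Proof. by move=> a u v; rewrite mulrDl scalerAl. Qed.

Lemma lmul_bnd (V : pzRingType) (R : algType V) (B : (R -> Prop) -> Prop) (c : R) :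
  is_alg_bornology B -> bounded_map B B (fun y => c * y).
Proof.
move=> hB A hA; apply: (born_sub hB.1 (alg_mul hB (born_single c hB.1) hA)).
by move=> _ [y [hy ->]]; exists c, y.
Qed.
Lemma rmul_bnd (V : pzRingType) (R : algType V) (B : (R -> Prop) -> Prop) (c : R) :
  is_alg_bornology B -> bounded_map B B (fun y => y * c).
Proof.
move=> hB A hA; apply: (born_sub hB.1 (alg_mul hB hA (born_single c hB.1))).
by move=> _ [y [hy ->]]; exists y, c.
Qed.

Lemma bounded_add (V : pzRingType) (X Y : lmodType V) BX (BY : (Y -> Prop) -> Prop)
  (f g : X -> Y) (a : V) :
  is_convex_bornology BY -> bounded_map BX BY f -> bounded_map BX BY g ->
  bounded_map BX BY (fun x => a *: f x + g x).
Proof.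
move=> hY hf hg A hA; apply: (born_sub hY (born_span hY (born_union hY (hf _ hA) (hg _ hA)))).
move=> _ [x [hx ->]]; apply: span_add.
  by apply: span_scale; apply: span_in; left; exists x.
by apply: span_in; right; exists x.
Qed.


Lemma lin_add (V : idomainType) (X Y : lmodType V) (f g : X -> Y) (a : V) :
  is_linear f -> is_linear g -> is_linear (fun x => a *: f x + g x).
Proof.
move=> hf hg c u v; rewrite hf hg scalerDr !scalerA mulrC -!scalerA.
by rewrite scalerDr addrACA.
Qed.

Lemma part2 (V : idomainType) (pi : V) (R S T : algType V) (BX : (R -> Prop) -> Prop)
  (BY : (S -> Prop) -> Prop) (BT : (T -> Prop) -> Prop) (t : R -> S -> T)
  (hX : is_alg_bornology BX) (hY : is_alg_bornology BY) (ht : is_tensor_algebra t)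
  (hBT : forall A, BT A <-> tensor_bornology BX BY t A)
  (C1 : algType V) (BC1 : (C1 -> Prop) -> Prop) (j1 : T -> C1)
  (Rb : algType V) (BRb : (Rb -> Prop) -> Prop) (jR : R -> Rb)
  (Sb : algType V) (BSb : (Sb -> Prop) -> Prop) (jS : S -> Sb)
  (T2 : algType V) (t2 : Rb -> Sb -> T2)
  (C2 : algType V) (BC2 : (C2 -> Prop) -> Prop) (j2 : T2 -> C2) :
  is_alg_completion pi BT BC1 j1 ->
  is_alg_completion pi BX BRb jR ->
  is_alg_completion pi BY BSb jS ->
  is_tensor_algebra t2 ->
  is_alg_completion pi (tensor_bornology BRb BSb t2) BC2 j2 ->
  exists (phi : C1 -> C2) (psi : C2 -> C1),
    is_alg_hom phi /\ cancel phi psi /\ cancel psi phi /\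
    bounded_map BC1 BC2 phi /\ bounded_map BC2 BC1 psi /\
    (forall r s, phi (j1 (t r s)) = j2 (t2 (jR r) (jS s))).
Proof.
move=> [hC1a [hj1 hc1]] [hRa [hjR hcR]] [hSa [hjS hcS]] ht2 [hC2a [hj2 hc2]].
have hC1 := hC1a.1; have hC2 := hC2a.1; have hRb := hRa.1; have hSb := hSa.1.
have hC1c := hc1.2.1; have hC2c := hc2.2.1.
have hj1b := hc1.2.2.2.1; have hj2b := hc2.2.2.2.1.
have hjRb := hcR.2.2.2.1; have hjSb := hcS.2.2.2.1.
have hj1l := hj1.1; have hj2l := hj2.1; have hjRl := hjR.1; have hjSl := hjS.1.
have hJ : forall A0 B0, BX A0 -> BY B0 ->
    BC1 (fun c => exists r s, A0 r /\ B0 s /\ c = j1 (t r s)).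
  move=> A0 B0 hA0 hB0.
  have hT : BT (span (ptens t (span A0) (span B0))).
    apply/hBT; apply: tensor_gen; try exact: span_submod.
    - exact: born_span hX.1 hA0.
    - exact: born_span hY.1 hB0.
  apply: (born_sub hC1 (hj1b _ hT)) => _ [r [s [hr [hs ->]]]]; exists (t r s); split => //.
  by apply: span_in; exists r, s; split; [apply: span_in|split; [apply: span_in|]].
have hbil_h : is_bilinear (fun r s => t2 (jR r) (jS s)).
  split => [r|s]; [exact: lin_comp hjSl (tens_lin2 (jR r) ht2) | exact: lin_comp hjRl (tens_lin1 (jS s) ht2)].
have [h [hh hht]] := tens_ext ht.1 hbil_h.
have hphi0b : bounded_map BT BC2 (fun z => j2 (h z)).
  move=> A hA; have [S1 [U [hS [hbS [hU [hbU hA']]]]]] := (tensorE _ hX.1 hY.1 ht.1).1 ((hBT A).1 hA).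
  have hT2 : tensor_bornology BRb BSb t2 (span (ptens t2 (img jR S1) (img jS U))).
    apply: tensor_gen.
    - exact: img_submod hjRl hS.
    - exact: hjRb.
    - exact: img_submod hjSl hU.
    - exact: hjSb.
  apply: (born_sub hC2 (hj2b _ hT2)) => _ [z [hz ->]]; exists (h z); split => //.
  have := lin_span hh (ex_intro _ z (conj (hA' z hz) erefl)); apply: span_mono.
  move=> _ [_ [[r [s [hr [hs ->]]]] ->]]; rewrite hht; exists (jR r), (jS s).
  by split; [exists r|split; [exists s|]].
have [phi [hphi [hphib hphij]]] := comp_ext hc1 hC2 hC2c (lin_comp hh hj2l) hphi0b.
have hbex : forall r, exists g : Sb -> C1, is_linear g /\ bounded_map BSb BC1 g /\
    forall s, g (jS s) = j1 (t r s).
  move=> r; apply: (comp_ext hcS hC1 hC1c).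
  - exact: lin_comp (tens_lin2 r ht) hj1l.
  - move=> B0 hB0; apply: (born_sub hC1 (hJ _ _ (born_single r hX.1) hB0)).
    by move=> _ [s [hs ->]]; exists r, s.
have [b hb] := choice hbex.
have buniq : forall r (g : Sb -> C1), is_linear g -> bounded_map BSb BC1 g ->
    (forall s, g (jS s) = j1 (t r s)) -> forall sb, g sb = b r sb.
  move=> r g hg hgb hgj; apply: (comp_uniq hcS hC1 hC1c hg hgb (hb r).1 (hb r).2.1).
  by move=> s; rewrite hgj (hb r).2.2.
have blin : forall a r r' sb, b (a *: r + r') sb = a *: b r sb + b r' sb.
  move=> a r r' sb; symmetry; apply: (buniq (a *: r + r') (fun sb => a *: b r sb + b r' sb)).
  - exact: lin_add a (hb r).1 (hb r').1.
  - exact: bounded_add a hC1 (hb r).2.1 (hb r').2.1.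
  - by move=> s; rewrite !(hb _).2.2 -hj1l (tens_lin1 s ht).
have step1 : forall A0 B, BX A0 -> BSb B ->
    BC1 (fun c => exists r sb, A0 r /\ B sb /\ c = b r sb).
  move=> A0 B hA0 hB.
  pose F := fun s r => if pselect (A0 r) then j1 (t r s) else 0.
  have hFP : forall s, Pl BC1 A0 (F s).
    move=> s; split; first by move=> r hr; rewrite /F; case: (pselect (A0 r)).
    apply: (born_sub hC1 (hJ _ _ hA0 (born_single s hY.1))) => _ [r [hr ->]].
    by exists r, s; rewrite /F; case: (pselect (A0 r)).
  have hFl : forall a u v r, F (a *: u + v) r = a *: F u r + F v r.
    move=> a u v r; rewrite /F; case: (pselect (A0 r)) => ?; last by rewrite scaler0 addr0.
    by rewrite (tens_lin2 r ht) hj1l.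
  have hFb : forall B0, BY B0 -> BC1 (fun w => exists s r, B0 s /\ A0 r /\ w = F s r).
    move=> B0 hB0; apply: (born_sub hC1 (hJ _ _ hA0 hB0)) => _ [s [r [hs [hr ->]]]].
    by exists r, s; rewrite /F; case: (pselect (A0 r)).
  have [Phi0 [hPhi0 [hPhi0b hPhi0e]]] := linf_map hC1 hFP hFl hFb.
  have [Phi [hPhi [hPhib hPhij]]] := comp_ext hcS (@Bl_convex _ _ _ _ A0 hC1)
    (@linf_complete _ _ _ _ A0 hC1 pi hC1c) hPhi0 hPhi0b.
  have e : forall r sb, A0 r -> proj1_sig (Phi sb) r = b r sb.
    move=> r sb hr; apply: (buniq r (fun sb => proj1_sig (Phi sb) r)).
    - exact: (lin_comp hPhi (@lsub_lin _ _ _ _ _ r)).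
    - exact: bounded_comp hC1 hPhib (@Bl_eval _ _ _ _ A0 hC1 r).
    - by move=> s; rewrite hPhij hPhi0e /F; case: (pselect (A0 r)).
  apply: (born_sub hC1 (hPhib _ hB)) => _ [r [sb [hr [hsb ->]]]]; rewrite -e //.
  by exists (Phi sb); split; [exists sb|exists r].
have hgex : forall sb, exists g : Rb -> C1, is_linear g /\ bounded_map BRb BC1 g /\
    forall r, g (jR r) = b r sb.
  move=> sb; apply: (comp_ext hcR hC1 hC1c).
  - by move=> a u v; apply: blin.
  - move=> A0 hA0; apply: (born_sub hC1 (step1 _ _ hA0 (born_single sb hSb))).
    by move=> _ [r [hr ->]]; exists r, sb.
have [g hg] := choice hgex.
have guniq : forall sb (f : Rb -> C1), is_linear f -> bounded_map BRb BC1 f ->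
    (forall r, f (jR r) = b r sb) -> forall rb, f rb = g sb rb.
  move=> sb f hf hfb hfj; apply: (comp_uniq hcR hC1 hC1c hf hfb (hg sb).1 (hg sb).2.1).
  by move=> r; rewrite hfj (hg sb).2.2.
have step2 : forall A B, BRb A -> BSb B ->
    BC1 (fun c => exists rb sb, A rb /\ B sb /\ c = g sb rb).
  move=> A B hA hB.
  pose F := fun r sb => if pselect (B sb) then b r sb else 0.
  have hFP : forall r, Pl BC1 B (F r).
    move=> r; split; first by move=> sb hs; rewrite /F; case: (pselect (B sb)).
    apply: (born_sub hC1 (step1 _ _ (born_single r hX.1) hB)) => _ [sb [hs ->]].
    by exists r, sb; rewrite /F; case: (pselect (B sb)).
  have hFl : forall a u v sb, F (a *: u + v) sb = a *: F u sb + F v sb.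
    move=> a u v sb; rewrite /F; case: (pselect (B sb)) => ?; last by rewrite scaler0 addr0.
    exact: blin.
  have hFb : forall A0, BX A0 -> BC1 (fun w => exists r sb, A0 r /\ B sb /\ w = F r sb).
    move=> A0 hA0; apply: (born_sub hC1 (step1 _ _ hA0 hB)) => _ [r [sb [hr [hs ->]]]].
    by exists r, sb; rewrite /F; case: (pselect (B sb)).
  have [Psi0 [hPsi0 [hPsi0b hPsi0e]]] := linf_map hC1 hFP hFl hFb.
  have [Psi [hPsi [hPsib hPsij]]] := comp_ext hcR (@Bl_convex _ _ _ _ B hC1)
    (@linf_complete _ _ _ _ B hC1 pi hC1c) hPsi0 hPsi0b.
  have e : forall rb sb, B sb -> proj1_sig (Psi rb) sb = g sb rb.
    move=> rb sb hs; apply: (guniq sb (fun rb => proj1_sig (Psi rb) sb)).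
    - exact: (lin_comp hPsi (@lsub_lin _ _ _ _ _ sb)).
    - exact: bounded_comp hC1 hPsib (@Bl_eval _ _ _ _ B hC1 sb).
    - by move=> r; rewrite hPsij hPsi0e /F; case: (pselect (B sb)).
  apply: (born_sub hC1 (hPsib _ hA)) => _ [rb [sb [hr [hsb ->]]]]; rewrite -e //.
  by exists (Psi rb); split; [exists rb|exists sb].
have hb2 : is_bilinear (fun rb sb => g sb rb).
  split; last by move=> sb; exact: (hg sb).1.
  move=> rb a u v; symmetry; apply: (guniq (a *: u + v) (fun rb => a *: g u rb + g v rb)).
  - exact: lin_add a (hg u).1 (hg v).1.
  - exact: bounded_add a hC1 (hg u).2.1 (hg v).2.1.
  - by move=> r; rewrite !(hg _).2.2 (hb r).1.
have [k [hk hkt]] := tens_ext ht2.1 hb2.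
have hkb : bounded_map (tensor_bornology BRb BSb t2) BC1 k.
  move=> A hA; have [A1 [B1 [_ [hbA [_ [hbB hAs]]]]]] := (tensorE _ hRb hSb ht2.1).1 hA.
  apply: (born_sub hC1 (born_span hC1 (step2 _ _ hbA hbB))) => _ [z [hz ->]].
  have := lin_span hk (ex_intro _ z (conj (hAs z hz) erefl)); apply: span_mono.
  move=> _ [_ [[rb [sb [hr [hs ->]]]] ->]]; rewrite hkt; exists rb, sb; by split; [|split].
have [psi [hpsi [hpsib hpsij]]] := comp_ext hc2 hC1 hC1c hk hkb.
have ekh : forall z, k (h z) = j1 z.
  apply: (tens_uniq ht.1 (lin_comp hh hk) hj1l) => r s.
  by rewrite hht hkt (hg _).2.2 (hb r).2.2.
have epp : forall x, psi (phi x) = x.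
  apply: (comp_uniq hc1 hC1 hC1c (lin_comp hphi hpsi) (bounded_comp hC1 hphib hpsib)
    (@lin_id _ _) (bounded_id hC1)) => z.
  by rewrite hphij hpsij ekh.
have inner : forall r sb, phi (b r sb) = j2 (t2 (jR r) sb).
  move=> r; apply: (comp_uniq hcS hC2 hC2c).
  - exact: lin_comp (hb r).1 hphi.
  - exact: bounded_comp hC2 (hb r).2.1 hphib.
  - exact: lin_comp (tens_lin2 (jR r) ht2) hj2l.
  - move=> B hB.
    have hT2 : tensor_bornology BRb BSb t2 (span (ptens t2 (span (fun x => x = jR r)) (span B))).
      apply: tensor_gen; try exact: span_submod.
      - exact: born_span hRb (born_single _ hRb).
      - exact: born_span hSb hB.
    apply: (born_sub hC2 (hj2b _ hT2)) => _ [sb [hs ->]]; exists (t2 (jR r) sb); split => //.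
    by apply: span_in; exists (jR r), sb; split; [apply: span_in|split; [apply: span_in|]].
  - by move=> s; rewrite (hb r).2.2 hphij hht.
have outer : forall sb rb, phi (g sb rb) = j2 (t2 rb sb).
  move=> sb; apply: (comp_uniq hcR hC2 hC2c).
  - exact: lin_comp (hg sb).1 hphi.
  - exact: bounded_comp hC2 (hg sb).2.1 hphib.
  - exact: lin_comp (tens_lin1 sb ht2) hj2l.
  - move=> A hA.
    have hT2 : tensor_bornology BRb BSb t2 (span (ptens t2 (span A) (span (fun x => x = sb)))).
      apply: tensor_gen; try exact: span_submod.
      - exact: born_span hRb hA.
      - exact: born_span hSb (born_single _ hSb).
    apply: (born_sub hC2 (hj2b _ hT2)) => _ [rb [hr ->]]; exists (t2 rb sb); split => //.
    by apply: span_in; exists rb, sb; split; [apply: span_in|split; [apply: span_in|]].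
  - by move=> r; rewrite (hg sb).2.2 inner.
have ephik : forall w, phi (k w) = j2 w.
  apply: (tens_uniq ht2.1 (lin_comp hk hphi) hj2l) => rb sb.
  by rewrite hkt outer.
have epsi : forall y, phi (psi y) = y.
  apply: (comp_uniq hc2 hC2 hC2c (lin_comp hpsi hphi) (bounded_comp hC2 hpsib hphib)
    (@lin_id _ _) (bounded_id hC2)) => w.
  by rewrite hpsij ephik.
have hhm1 : forall r s w, h (t r s * w) = h (t r s) * h w.
  move=> r s; apply: (tens_uniq ht.1 (lin_comp (lmul_lin (t r s)) hh)
    (lin_comp hh (lmul_lin (h (t r s))))) => r' s' /=.
  by rewrite ht.2.2 !hht ht2.2.2 hjR.2.2 hjS.2.2.
have hhm : forall z w, h (z * w) = h z * h w.
  move=> z w; move: z; apply: (tens_uniq ht.1 (lin_comp (rmul_lin w) hh)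
    (lin_comp hh (rmul_lin (h w)))) => r s /=.
  exact: hhm1.
have hphim1 : forall z y, phi (j1 z * y) = phi (j1 z) * phi y.
  move=> z; apply: (comp_uniq hc1 hC2 hC2c).
  - exact: lin_comp (lmul_lin _) hphi.
  - exact: bounded_comp hC2 (lmul_bnd _ hC1a) hphib.
  - exact: lin_comp hphi (lmul_lin _).
  - exact: bounded_comp hC2 hphib (lmul_bnd _ hC2a).
  - by move=> w; rewrite -hj1.2.2 !hphij hhm hj2.2.2.
have hphim : forall x y, phi (x * y) = phi x * phi y.
  move=> x y; move: x; apply: (comp_uniq hc1 hC2 hC2c).
  - exact: lin_comp (rmul_lin _) hphi.
  - exact: bounded_comp hC2 (rmul_bnd _ hC1a) hphib.
  - exact: lin_comp hphi (rmul_lin _).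
  - exact: bounded_comp hC2 hphib (rmul_bnd _ hC2a).
  - by move=> w; apply: hphim1.
exists phi, psi; split.
  split => //; split => //.
  by rewrite -hj1.2.1 hphij -ht.2.1 hht hjR.2.1 hjS.2.1 ht2.2.1 hj2.2.1.
split => //; split => //; split => //; split => //.
by move=> r s; rewrite hphij hht.
Qed.


Theorem mainTheorem13 (V : idomainType) (pi : V) (eps : Rdefinitions.R)
  (hdvr : is_dvr_uniformizer pi) (hVcomplete : is_pi_adically_complete_ring pi)
  (heps0 : Rdefinitions.Rlt (Rdefinitions.IZR BinNums.Z0) eps)
  (heps1 : Rdefinitions.Rlt eps (Rdefinitions.IZR (BinNums.Zpos BinNums.xH)))
  (R S : algType V) (BR : (R -> Prop) -> Prop) (BS : (S -> Prop) -> Prop)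
  (hBR : is_alg_bornology BR) (hBS : is_alg_bornology BS)
  (T : algType V) (t : R -> S -> T) (ht : is_tensor_algebra t) :
  (forall A : T -> Prop,
     lg_bornology pi eps (tensor_bornology BR BS t) A <->
     tensor_bornology (lg_bornology pi eps BR) (lg_bornology pi eps BS) t A)
  /\
  (forall (C1 : algType V) (BC1 : (C1 -> Prop) -> Prop) (j1 : T -> C1)
          (Rb : algType V) (BRb : (Rb -> Prop) -> Prop) (jR : R -> Rb)
          (Sb : algType V) (BSb : (Sb -> Prop) -> Prop) (jS : S -> Sb)
          (T2 : algType V) (t2 : Rb -> Sb -> T2)
          (C2 : algType V) (BC2 : (C2 -> Prop) -> Prop) (j2 : T2 -> C2),
     is_alg_completion pi (lg_bornology pi eps (tensor_bornology BR BS t)) BC1 j1 ->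
     is_alg_completion pi (lg_bornology pi eps BR) BRb jR ->
     is_alg_completion pi (lg_bornology pi eps BS) BSb jS ->
     is_tensor_algebra t2 ->
     is_alg_completion pi (tensor_bornology BRb BSb t2) BC2 j2 ->
     exists (phi : C1 -> C2) (psi : C2 -> C1),
       is_alg_hom phi /\ cancel phi psi /\ cancel psi phi /\
       bounded_map BC1 BC2 phi /\ bounded_map BC2 BC1 psi /\
       (forall r s, phi (j1 (t r s)) = j2 (t2 (jR r) (jS s)))).
Proof.
have hBT : forall A : T -> Prop,
     lg_bornology pi eps (tensor_bornology BR BS t) A <->
     tensor_bornology (lg_bornology pi eps BR) (lg_bornology pi eps BS) t A.
  move=> A; split; [exact: part1b | exact: part1a].
split; first exact: hBT.
move=> C1 BC1 j1 Rb BRb jR Sb BSb jS T2 t2 C2 BC2 j2 h1 h2 h3 ht2 h5.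
exact: (part2 (lg_alg pi eps BR) (lg_alg pi eps BS) ht hBT h1 h2 h3 ht2 h5).
Qed.
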